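(* For every $m\ge2$, let $C=C_{2m}(1,1)=J_{2m}+E_{m-1,m+1}-E_{m,m+2}\in M_{2m}$. Then for all $\theta\in\mathbb{R}$ and $u\in\mathbb{C}$, $$\det\bigl(uI-H_C(\theta)\bigr)=2^{-2m}\bigl(U_m(u)-U_{m-1}(u)-U_{m-2}(u)\bigr)\bigl(U_m(u)+U_{m-1}(u)-U_{m-2}(u)\bigr).$$ In particular $C_{2m}(1,1)$ has the Circularity property.
   Context: $J_n$ is the $n\times n$ nilpotent Jordan block (ones on the first superdiagonal, zeros elsewhere); $E_{a,b}$ is the matrix unit with $1$ in position $(a,b)$ and zeros elsewhere. $H_X(\theta)=\frac12(e^{-i\theta}X+e^{i\theta}X^* )$; $X$ has the Circularity property if the spectrum of $H_X(\theta)$ is independent of $\theta$. $U_k$ are Chebyshev polynomials of the second kind: $U_{-1}=0$, $U_0=1$, $U_{k+1}(u)=2uU_k(u)-U_{k-1}(u)$. *)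

(* Defs.v *)
From HB Require Import structures.
From mathcomp Require Import all_boot all_order all_algebra.
From mathcomp Require Import reals trigo.
From mathcomp Require Import complex.
Set Implicit Arguments. Unset Strict Implicit. Unset Printing Implicit Defensive.
Import Order.TTheory GRing.Theory Num.Theory.
Local Open Scope ring_scope.

Definition expi (R : realType) (t : R) : R[i] := Complex (cos t) (sin t).

Definition adjmx (R : realType) (n : nat) (X : 'M[R[i]]_n) : 'M[R[i]]_n :=
  map_mx (@conjc R) X^T.

Definition Hmx (R : realType) (n : nat) (X : 'M[R[i]]_n) (t : R) : 'M[R[i]]_n :=
  2^-1 *: (expi (- t) *: X + expi t *: adjmx X).

Definition circular (R : realType) (n : nat) (X : 'M[R[i]]_n) : Prop :=
  forall (t1 t2 : R) (l : R[i]),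
    eigenvalue (Hmx X t1) l = eigenvalue (Hmx X t2) l.

Fixpoint chebU {F : nzRingType} (k : nat) (u : F) : F :=
  match k with
  | 0 => 1
  | 1 => 2 * u
  | (k'.+1 as k1).+1 => 2 * u * chebU k1 u - chebU k' u
  end.

(* The 2m x 2m matrix C_{2m}(1,1) = J_{2m} + E_{m-1,m+1} - E_{m,m+2}.
   Entries are indexed 1-based in the paper: row a = i+1, column b = j+1. *)
Definition Cmx (R : realType) (m : nat) : 'M[R[i]]_(2 * m) :=
  \matrix_(i < 2 * m, j < 2 * m)
    let a := i.+1 in let b := j.+1 in
    ((b == a.+1)%:R + ((a == m.-1) && (b == m.+1))%:R
                    - ((a == m) && (b == m.+2))%:R).

(* Main.v *)
Require Import Defs.
From HB Require Import structures.
From mathcomp Require Import all_boot all_order all_algebra.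
From mathcomp Require Import reals trigo.
From mathcomp Require Import complex.
From mathcomp Require Import ring lra zify.
Set Implicit Arguments. Unset Strict Implicit. Unset Printing Implicit Defensive.
Import Order.TTheory GRing.Theory Num.Theory.
Local Open Scope ring_scope.

Section Gen.
Variable R : comNzRingType.

Definition Mf n (f : nat -> nat -> R) : 'M[R]_n := \matrix_(i < n, j < n) f i j.

Lemma detMf_ext n f g : (forall i j, (i < n)%N -> (j < n)%N -> f i j = g i j) ->
  \det (Mf n f) = \det (Mf n g).
Proof. by move=> H; congr (\det _); apply/matrixP => i j; rewrite !mxE H. Qed.

Lemma detMf_tr n f : \det (Mf n f) = \det (Mf n (fun i j => f j i)).
Proof. by rewrite -det_tr; congr (\det _); apply/matrixP => i j; rewrite !mxE. Qed.

Lemma expand_first n f : \det (Mf n.+1 f) =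
  \sum_(j < n.+1) f 0%N j * ((-1) ^+ j * \det (Mf n (fun a b => f a.+1 (bump j b)))).
Proof.
rewrite (expand_det_row _ ord0); apply: eq_bigr => j _; rewrite !mxE /cofactor add0n.
by congr (_ * (_ * \det _)); apply/matrixP => a b; rewrite !mxE.
Qed.

Lemma expand_last n f : \det (Mf n.+1 f) =
  \sum_(j < n.+1) f n j * ((-1) ^+ (n + j) * \det (Mf n (fun a b => f a (bump j b)))).
Proof.
rewrite (expand_det_row _ ord_max); apply: eq_bigr => j _; rewrite !mxE /cofactor.
congr (_ * (_ * \det _)); apply/matrixP => a b; rewrite !mxE /=.
by rewrite /bump leqNgt ltn_ord.
Qed.

Lemma bump0n j : bump 0 j = j.+1. Proof. by rewrite /bump leq0n. Qed.
Lemma bump1S j : bump 1 j.+1 = j.+2. Proof. by []. Qed.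
Lemma sgn_kk k : (-1) ^+ (k + k) = 1 :> R.
Proof. by rewrite -signr_odd addnn odd_double. Qed.
Lemma sgn_Skk k : (-1) ^+ (k.+1 + k) = -1 :> R.
Proof. by rewrite -signr_odd addSn addnn /= odd_double. Qed.
Lemma bump10 : bump 1 0 = 0%N. Proof. by []. Qed.

Lemma peel_front n f : (forall j, (2 <= j)%N -> f 0%N j = 0) ->
  (forall i, (2 <= i)%N -> f i 0%N = 0) ->
  \det (Mf n.+2 f) = f 0%N 0%N * \det (Mf n.+1 (fun a b => f a.+1 b.+1))
     - f 0%N 1%N * f 1%N 0%N * \det (Mf n (fun a b => f a.+2 b.+2)).
Proof.
move=> Hr Hc.
rewrite expand_first big_ord_recl big_ord_recl big1 ?addr0; last first.
  by move=> j _; rewrite Hr ?mul0r //= !bump0n.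
rewrite /= !bump0n expr0 mul1r expr1.
rewrite (detMf_ext (g := fun a b => f a.+1 b.+1)); last by move=> i j _ _; rewrite bump0n.
congr (_ + _).
rewrite detMf_tr expand_first big_ord_recl big1 ?addr0; last first.
  by move=> j _; rewrite Hc ?mul0r //= bump0n.
rewrite /= expr0 mul1r.
rewrite (detMf_ext (g := fun a b => f b.+2 a.+2)); last first.
  by move=> i j _ _; rewrite bump0n bump1S.
rewrite [X in _ * (_ * (_ * X))]detMf_tr /=.
by rewrite bump10 mulN1r mulrN mulrA.
Qed.

Lemma peel_back n f : (forall j, (j < n)%N -> f n.+1 j = 0) ->
  (forall i, (i < n)%N -> f i n.+1 = 0) ->
  \det (Mf n.+2 f) = f n.+1 n.+1 * \det (Mf n.+1 f)
     - f n.+1 n * f n n.+1 * \det (Mf n f).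
Proof.
move=> Hr Hc.
rewrite expand_last big_ord_recr big_ord_recr /= big1 ?add0r; last first.
  by move=> j _; rewrite Hr ?mul0r //=.
rewrite sgn_kk sgn_Skk mul1r addrC.
rewrite (detMf_ext (n := n.+1) (g := f)); last first.
  by move=> i j _ hj; rewrite /bump leqNgt hj.
congr (_ + _).
rewrite detMf_tr expand_last big_ord_recr /= big1 ?add0r; last first.
  by move=> j _; rewrite /bump leqnn Hc ?mul0r.
rewrite sgn_kk mul1r.
rewrite (detMf_ext (n := n) (g := fun a b => f b a)); last first.
  by move=> i j hi hj; rewrite /bump leqNgt hj leqNgt hi.
rewrite -[X in _ * (_ * (_ * X))]detMf_tr /=.
by rewrite /bump leqnn mulN1r mulrN mulrA.
Qed.

Fixpoint W (x : R) (k : nat) : R :=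
  match k with
  | 0 => 0
  | 1 => 1
  | (k'.+1 as k1).+1 => x * W x k1 - W x k'
  end.

Lemma rec_lemma x p (D : nat -> R) :
  (forall k, (k < p)%N -> D k = x * D k.+1 - D k.+2) ->
  D 0%N = W x p.+1 * D p - W x p * D p.+1.
Proof.
elim/ltn_ind: p D => -[|[|q]] IH D H /=.
- by rewrite mul1r mul0r subr0.
- by rewrite (H 0%N) // mulr1 subr0 mul1r.
rewrite (H 0%N) //.
rewrite (IH q.+1 _ (fun k => D k.+1)) //; last by move=> k hk; apply: H.
rewrite (IH q _ (fun k => D k.+2)) //; last by move=> k hk; apply: H; lia.
rewrite /=. ring.
Qed.

Ltac dsimp := rewrite !(expand_first, big_ord_recl, big_ord0, det_mx00) /bump -?plusE /=; ring.

Lemma det2 g : \det (Mf 2 g) = g 0%N 0%N * g 1%N 1%N - g 0%N 1%N * g 1%N 0%N.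
Proof. dsimp. Qed.

Lemma det3 g : \det (Mf 3 g) =
  g 0%N 0%N * (g 1%N 1%N * g 2%N 2%N - g 1%N 2%N * g 2%N 1%N)
  - g 0%N 1%N * (g 1%N 0%N * g 2%N 2%N - g 1%N 2%N * g 2%N 0%N)
  + g 0%N 2%N * (g 1%N 0%N * g 2%N 1%N - g 1%N 1%N * g 2%N 0%N).
Proof. dsimp. Qed.

Lemma det4_expand g : \det (Mf 4 g) =
  \sum_(j < 4) g 0%N j * ((-1) ^+ j * \det (Mf 3 (fun a b => g a.+1 (bump j b)))).
Proof. exact: expand_first. Qed.

End Gen.

Section S.
Variable R : realType.
Lemma two_neq0 : (2 : R[i]) != 0.
Proof. by rewrite pnatr_eq0. Qed.

Lemma expiN (t : R) : expi t * expi (- t) = 1.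
Proof.
rewrite /expi cosN sinN.
change (Complex (cos t * cos t - sin t * (- sin t)) (cos t * (- sin t) + sin t * cos t) = 1 :> R[i]).
have -> : cos t * cos t - sin t * (- sin t) = 1 by rewrite -(cos2Dsin2 t); ring.
by rewrite mulrN mulrC addNr.
Qed.

Definition cc (p i j : nat) : R[i] :=
  (j == i.+1)%:R + ((i == p) && (j == p.+2))%:R - ((i == p.+1) && (j == p.+3))%:R.
Definition FF p (x e w : R[i]) i j := x * (i == j)%:R - w * cc p i j - e * cc p j i.

Lemma Cmx_cc p (i j : 'I_(2 * p.+2)) : Cmx R p.+2 i j = cc p i j.
Proof. by rewrite /Cmx [LHS]mxE. Qed.

Lemma conj_cc p i j : (cc p i j)^*%C = cc p i j.
Proof. by rewrite /cc rmorphB rmorphD /= !conjc_nat. Qed.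

Lemma Hmx_ij n (X : 'M[R[i]]_n) t i j :
  Hmx X t i j = 2^-1 * (expi (- t) * X i j + expi t * (X j i)^*%C).
Proof. by rewrite /Hmx /adjmx !mxE. Qed.

Lemma Hmx_eq p t u : u%:M - Hmx (Cmx R p.+2) t =
  2^-1 *: Mf (2 * p.+2) (FF p (2 * u) (expi t) (expi (- t))).
Proof.
apply/matrixP => i j; rewrite mxE [in RHS]mxE [X in _ + X = _]mxE Hmx_ij !Cmx_cc /FF [X in X + _ = _]mxE /Mf mxE.
rewrite conj_cc -mulr_natr.
by field.
Qed.

Ltac boolcase := rewrite /cc; do ![case: eqP => ? /=];
  first [by exfalso; lia | by rewrite ?(addr0, subr0, add0r, sub0r, subrr) | idtac].

Section Core.
Variables (p : nat) (x e w : R[i]).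
Local Notation F := (FF p x e w).

Lemma FF_diag i : F i i = x.
Proof. rewrite /FF eqxx mulr1. have -> : cc p i i = 0 ; first boolcase. by rewrite !mulr0 !subr0. Qed.

Lemma FF_sup k : F k k.+1 = - w.
Proof.
rewrite /FF. have -> : (k == k.+1) = false by apply/eqP; lia.
have -> : cc p k k.+1 = 1; first boolcase.
have -> : cc p k.+1 k = 0; first boolcase.
by rewrite /= !mulr0 mulr1 !subr0 ?sub0r.
Qed.

Lemma FF_sub k : F k.+1 k = - e.
Proof.
rewrite /FF. have -> : (k.+1 == k) = false by apply/eqP; lia.
have -> : cc p k k.+1 = 1; first boolcase.
have -> : cc p k.+1 k = 0; first boolcase.
by rewrite /= !mulr0 mulr1 !subr0 ?sub0r.
Qed.

Lemma FF_far i j : (i.+2 <= j)%N -> ((i != p) && (i != p.+1)) || ((j != p.+2) && (j != p.+3)) ->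
  F i j = 0 /\ F j i = 0.
Proof.
move=> hij hs.
have h1 : (i == j) = false by apply/eqP; lia.
have h2 : (j == i) = false by apply/eqP; lia.
have c1 : cc p i j = 0 by move: hs; boolcase.
have c2 : cc p j i = 0; first boolcase.
by rewrite /FF h1 h2 c1 c2 !mulr0 !subr0.
Qed.


Definition ccK (a b : nat) : R[i] :=
  (b == a.+1)%:R + ((a == 0%N) && (b == 2%N))%:R - ((a == 1%N) && (b == 3%N))%:R.
Definition Kf a b := x * (a == b)%:R - w * ccK a b - e * ccK b a.

Lemma eqL0 a : (p + a == p)%N = (a == 0%N). Proof. by apply/eqP/eqP; lia. Qed.
Lemma eqL1 a : (p + a == p.+1)%N = (a == 1%N). Proof. by apply/eqP/eqP; lia. Qed.
Lemma eqL2 a : (p + a == p.+2)%N = (a == 2%N). Proof. by apply/eqP/eqP; lia. Qed.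
Lemma eqL3 a : (p + a == p.+3)%N = (a == 3%N). Proof. by apply/eqP/eqP; lia. Qed.
Lemma eqLS a b : (p + b == (p + a).+1)%N = (b == a.+1). Proof. by apply/eqP/eqP; lia. Qed.
Lemma eqLE a b : (p + a == p + b)%N = (a == b). Proof. by apply/eqP/eqP; lia. Qed.

Lemma FF_core a b : F (p + a)%N (p + b)%N = Kf a b.
Proof. by rewrite /FF /Kf /cc /ccK !eqL0 !eqL1 !eqL2 !eqL3 !eqLS !eqLE. Qed.

Lemma FF_core1 a b : F (p.+1 + a)%N (p.+1 + b)%N = Kf a.+1 b.+1.
Proof. by rewrite !addSnnS FF_core. Qed.

Lemma front r : e * w = 1 -> \det (Mf (p + r.+2)%N F) =
  W x p.+1 * \det (Mf r.+2 Kf) - W x p * \det (Mf r.+1 (fun a b => Kf a.+1 b.+1)).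
Proof.
move=> hew.
pose G k := \det (Mf (p + r.+2 - k)%N (fun a b => F (k + a)%N (k + b)%N)).
have H0 : G 0%N = W x p.+1 * G p - W x p * G p.+1.
  apply: rec_lemma => k hk; rewrite /G.
  have -> : (p + r.+2 - k = (p + r - k).+2)%N by lia.
  have -> : (p + r.+2 - k.+1 = (p + r - k).+1)%N by lia.
  have -> : (p + r.+2 - k.+2 = (p + r - k))%N by lia.
  rewrite peel_front; first last.
  - move=> j hj; rewrite addn0; case: (@FF_far k (k + j)%N) => //; first lia.
    by apply/orP; left; apply/andP; split; apply/eqP; lia.
  - move=> j hj; rewrite addn0; case: (@FF_far k (k + j)%N) => //; first lia.
    by apply/orP; left; apply/andP; split; apply/eqP; lia.
  rewrite addn0 FF_diag addn1 FF_sup FF_sub mulrNN [w * e]mulrC hew mul1r.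
  congr (_ * _ - _).
    by apply: detMf_ext => a b _ _; rewrite !addnS !addSn.
  by apply: detMf_ext => a b _ _; rewrite !addnS !addSn.
move: H0; rewrite /G subn0 addKn.
have -> : (p + r.+2 - p.+1 = r.+1)%N by lia.
rewrite (detMf_ext (g := F)); last by move=> a b _ _; rewrite !add0n.
rewrite (detMf_ext (n := r.+2) (g := Kf)); last by move=> a b _ _; rewrite FF_core.
by rewrite (detMf_ext (n := r.+1) (g := fun a b => Kf a.+1 b.+1)) // => a b _ _; rewrite FF_core1.
Qed.

Lemma back : e * w = 1 -> \det (Mf (2 * p.+2)%N F) =
  W x p.+1 * \det (Mf p.+4 F) - W x p * \det (Mf p.+3 F).
Proof.
move=> hew.
pose D k := \det (Mf (2 * p.+2 - k)%N F).
have H0 : D 0%N = W x p.+1 * D p - W x p * D p.+1.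
  apply: rec_lemma => k hk; rewrite /D.
  have -> : (2 * p.+2 - k = (2 * p.+2 - k.+2).+2)%N by lia.
  have -> : (2 * p.+2 - k.+1 = (2 * p.+2 - k.+2).+1)%N by lia.
  set n := (2 * p.+2 - k.+2)%N.
  have hn : (p.+3 <= n)%N by rewrite /n; lia.
  rewrite peel_back; first last.
  - by move=> i hi; case: (@FF_far i n.+1) => //; lia.
  - by move=> j hj; case: (@FF_far j n.+1) => //; lia.
  by rewrite FF_diag FF_sub FF_sup mulrNN hew mul1r.
move: H0; rewrite /D subn0.
have -> : (2 * p.+2 - p = p.+4)%N by lia.
by have -> : (2 * p.+2 - p.+1 = p.+3)%N by lia.
Qed.

Lemma detF_all : e * w = 1 -> \det (Mf (2 * p.+2)%N F) =
  W x p.+1 * (W x p.+1 * \det (Mf 4 Kf) - W x p * \det (Mf 3 (fun a b => Kf a.+1 b.+1)))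
  - W x p * (W x p.+1 * \det (Mf 3 Kf) - W x p * \det (Mf 2 (fun a b => Kf a.+1 b.+1))).
Proof.
move=> hew; rewrite back //.
have -> : p.+4 = (p + 2.+2)%N by lia.
have -> : p.+3 = (p + 1.+2)%N by lia.
by rewrite !front.
Qed.

End Core.
Lemma chebU_SS (u : R[i]) k : chebU k.+2 u = 2 * u * chebU k.+1 u - chebU k u.
Proof. by []. Qed.
Lemma W_SS (y : R[i]) k : W y k.+2 = y * W y k.+1 - W y k.
Proof. by []. Qed.

Lemma chebU_W (u : R[i]) k : chebU k u = W (2 * u) k.+1.
Proof.
suff : chebU k u = W (2 * u) k.+1 /\ chebU k.+1 u = W (2 * u) k.+2 by case.
elim: k => [|k [IH1 IH2]]; first by rewrite /= mulr1 subr0.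
split; first exact: IH2.
by rewrite chebU_SS W_SS IH1 IH2.
Qed.

Lemma eig_det n (A : 'M[R[i]]_n) a : eigenvalue A a = (\det (a%:M - A) == 0).
Proof.
apply/eigenvalueP/det0P=> [[v Av_av v_nz] | [v v_nz Av_av]]; exists v => //.
  by rewrite mulmxBr Av_av mul_mx_scalar subrr.
by apply/eqP; rewrite -mul_mx_scalar eq_sym -subr_eq0 -mulmxBr Av_av.
Qed.

Lemma main_det p t u : \det (u%:M - Hmx (Cmx R p.+2) t) =
       (2 ^+ (2 * p.+2))^-1
       * (chebU p.+2 u - chebU p.+1 u - chebU p u)
       * (chebU p.+2 u + chebU p.+1 u - chebU p u).
Proof.
rewrite Hmx_eq detZ detF_all ?expiN //.
have hew := expiN t.
move: (expi t) (expi (- t)) hew => e w hew.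
rewrite !chebU_W !W_SS.
move: (W (2 * u) p.+1) (W (2 * u) p) => a b.
rewrite det4_expand !big_ord_recl big_ord0 /= !det3 det2 /Kf /ccK /bump -?plusE /=.
have e0 : e != 0.
  by apply/eqP => e0; move: hew; rewrite e0 mul0r => /eqP; rewrite eq_sym oner_eq0.
have -> : w = e^-1 by rewrite -[w](mulKf e0) hew mulr1.
rewrite exprVn -[RHS]mulrA; congr (_ * _).
by field.
Qed.
End S.

Theorem mainTheorem17 (R : realType) (m : nat) (hm : (2 <= m)%N) :
  (forall (t : R) (u : R[i]),
     \det (u%:M - Hmx (Cmx R m) t) =
       (2 ^+ (2 * m))^-1
       * (chebU m u - chebU m.-1 u - chebU m.-2 u)
       * (chebU m u + chebU m.-1 u - chebU m.-2 u))
  /\ circular (Cmx R m).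
Proof.
case: m hm => [//|[//|p _]].
have H : forall (t : R) (u : R[i]),
     \det (u%:M - Hmx (Cmx R p.+2) t) =
       (2 ^+ (2 * p.+2))^-1
       * (chebU p.+2 u - chebU p.+1 u - chebU p u)
       * (chebU p.+2 u + chebU p.+1 u - chebU p u).
  by move=> t u; apply: main_det.
split.
move=> t u; exact: (H t u).
move=> t1 t2 l.
exact: (etrans (eig_det _ _) (etrans (congr1 (fun z => z == 0) (etrans (H t1 l) (esym (H t2 l)))) (esym (eig_det _ _)))).
Qed.
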